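(* Let $H$ be a separable complex Hilbert space, $\{v_j\}_{j\in\mathbb N}$ an orthonormal basis of $H$, $\{w_j\}_{j\in\mathbb N}$ a set of unit vectors in $H$, and $N\ge1$. Let $\mathcal B_N=\{w_j\}_{1\le j\le N}\cup\{v_j\}_{j\ge N+1}$, $\hat H_N=\operatorname{span}\{v_1,\dots,v_N,w_1,\dots,w_N\}$ and $S_H=\{f\in H:\|f\|=1\}$. Then $\mathcal B_N$ is a frame of $H$ if and only if for every $f\in S_H\cap\hat H_N$, $$\sum_{j=1}^N\big(|\langle f,w_j\rangle|^2-|\langle f,v_j\rangle|^2\big)+1>0.$$ Moreover, the optimal frame bounds of $\mathcal B_N$ are the maximum and minimum of the functional $f\mapsto\sum_{j=1}^N(|\langle f,w_j\rangle|^2-|\langle f,v_j\rangle|^2)+1$ on $S_H\cap\hat H_N$.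
   Context: A sequence $\{u_j\}$ in $H$ is a frame if there are constants $0<A\le B<\infty$ with $A\|f\|^2\le\sum_j|\langle f,u_j\rangle|^2\le B\|f\|^2$ for all $f\in H$; the optimal frame bounds are the largest such $A$ and smallest such $B$. *)

(* Defs.v *)
From HB Require Import structures.
From mathcomp Require Import all_boot all_order all_algebra.
From mathcomp Require Import all_classical all_reals all_analysis.
From mathcomp Require complex.
Import complex.ComplexField.
Set Implicit Arguments. Unset Strict Implicit. Unset Printing Implicit Defensive.
Import Order.TTheory GRing.Theory Num.Theory.
Local Open Scope ring_scope.

Notation CC R := (complex.complex R).

Section Hilbert.
Variable R : realType.

Definition cconj (z : CC R) : CC R := complex.Complex (complex.Re z) (- complex.Im z).

Definition csqabs (z : CC R) : R := complex.Re z ^+ 2 + complex.Im z ^+ 2.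

Variable H : lmodType (CC R).
Variable ip : H -> H -> CC R.  (* inner product <f,g>, linear in f *)

Definition is_inner_product : Prop :=
  [/\ (forall (a : CC R) (x y z : H), ip (a *: x + y) z = a * ip x z + ip y z),
      (forall x y : H, ip y x = cconj (ip x y)),
      (forall x : H, 0 <= complex.Re (ip x x)) &
      (forall x : H, ip x x = 0 -> x = 0)].

Definition hnorm (x : H) : R := Num.sqrt (complex.Re (ip x x)).

Definition is_complete : Prop :=
  forall u : nat -> H,
    (forall e : R, 0 < e -> exists M : nat, forall m n : nat,
        (M <= m)%N -> (M <= n)%N -> hnorm (u m - u n) < e) ->
    exists l : H, forall e : R, 0 < e -> exists M : nat, forall n : nat,
        (M <= n)%N -> hnorm (u n - l) < e.

Definition is_hilbert : Prop := is_inner_product /\ is_complete.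

Definition is_ONB (v : nat -> H) : Prop :=
  (forall i j : nat, ip (v i) (v j) = (i == j)%:R) /\
  (forall f : H, (forall j, ip f (v j) = 0) -> f = 0).

Definition frame_sum (u : nat -> H) (f : H) : \bar R :=
  (\sum_(0 <= j <oo) (csqabs (ip f (u j)))%:E)%E.

Definition lower_frame_bound (u : nat -> H) (A : R) : Prop :=
  forall f : H, ((A * hnorm f ^+ 2)%:E <= frame_sum u f)%E.

Definition upper_frame_bound (u : nat -> H) (B : R) : Prop :=
  forall f : H, (frame_sum u f <= (B * hnorm f ^+ 2)%:E)%E.

Definition is_frame (u : nat -> H) : Prop :=
  exists A B : R, [/\ 0 < A, A <= B, lower_frame_bound u A & upper_frame_bound u B].

Definition optimal_lower_bound (u : nat -> H) (A : R) : Prop :=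
  lower_frame_bound u A /\ forall A', lower_frame_bound u A' -> A' <= A.

Definition optimal_upper_bound (u : nat -> H) (B : R) : Prop :=
  upper_frame_bound u B /\ forall B', upper_frame_bound u B' -> B <= B'.

(* B_N = {w_j}_{j<N} ∪ {v_j}_{j>=N}  (0-based indexing) *)
Definition BN (N : nat) (v w : nat -> H) : nat -> H :=
  fun j => if (j < N)%N then w j else v j.

Definition in_HN (N : nat) (v w : nat -> H) (f : H) : Prop :=
  exists a b : nat -> CC R,
    f = \sum_(j < N) (a j *: v j + b j *: w j).

Definition in_SH_HN (N : nat) (v w : nat -> H) (f : H) : Prop :=
  hnorm f = 1 /\ in_HN N v w f.

Definition Phi (N : nat) (v w : nat -> H) (f : H) : R :=
  \sum_(j < N) (csqabs (ip f (w j)) - csqabs (ip f (v j))) + 1.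

End Hilbert.

(* Main.v *)
Require Import Defs.
From HB Require Import structures.
From mathcomp Require Import all_boot all_order all_algebra.
From mathcomp Require Import all_classical all_reals all_analysis.
From mathcomp Require complex.
From mathcomp Require Import ring lra.
Import complex.ComplexField.
Import Order.TTheory GRing.Theory Num.Theory.
Import numFieldNormedType.Exports.
Local Open Scope ring_scope.

Section IP.
Variable R : realType.
Variable H : lmodType (CC R).
Variable ip : H -> H -> CC R.
Hypothesis hip : is_inner_product ip.

Local Notation cj := (@complex.conjc R).
Local Notation rC := (fun x : R => complex.Complex x 0).

Lemma cconjE (z : CC R) : cconj z = cj z.
Proof. by case: z. Qed.

Lemma mul_conj (z : CC R) : z * cj z = rC (csqabs z).
Proof. case: z => a b; rewrite /csqabs /=; congr complex.Complex; ring. Qed.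

Lemma csqabs_ge0 (z : CC R) : 0 <= csqabs z.
Proof. by rewrite /csqabs addr_ge0 // sqr_ge0. Qed.

Lemma csqabs_conj (z : CC R) : csqabs (cj z) = csqabs z.
Proof. by case: z => a b; rewrite /csqabs /= sqrrN. Qed.

Lemma rC_add (x y : R) : rC (x + y) = rC x + rC y.
Proof. by rewrite /= [RHS]/+%R /= addr0. Qed.

Lemma rC_sum (I : Type) (r : seq I) (P : pred I) (F : I -> R) :
  rC (\sum_(i <- r | P i) F i) = \sum_(i <- r | P i) rC (F i).
Proof.
by apply: (big_morph (fun x : R => complex.Complex x 0) rC_add).
Qed.

Lemma cjD (a b : CC R) : cj (a + b) = cj a + cj b.
Proof. case: a => a1 a2; case: b => b1 b2 /=; congr complex.Complex; ring. Qed.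
Lemma cjM (a b : CC R) : cj (a * b) = cj a * cj b.
Proof. case: a => a1 a2; case: b => b1 b2 /=; congr complex.Complex; ring. Qed.
Lemma cjN (a : CC R) : cj (- a) = - cj a.
Proof. by case: a => a1 a2 /=. Qed.
Lemma cj0 : cj 0 = 0.
Proof. by rewrite /= ?oppr0. Qed.
Lemma cjK (a : CC R) : cj (cj a) = a.
Proof. by case: a => a1 a2 /=; rewrite opprK. Qed.
Lemma cj_rC (x : R) : cj (rC x) = rC x.
Proof. by rewrite /= ?oppr0. Qed.

Lemma ipDl x y z : ip (x + y) z = ip x z + ip y z.
Proof. case: hip => h _ _ _; by rewrite -[x in LHS]scale1r h mul1r. Qed.

Lemma ip0l z : ip 0 z = 0.
Proof.
have := ipDl 0 0 z; rewrite addr0 => /(congr1 (fun t => t - ip 0 z)).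
by rewrite subrr addrK => ->.
Qed.

Lemma ipZl a x z : ip (a *: x) z = a * ip x z.
Proof. case: hip => h _ _ _; by rewrite -[_ *: _]addr0 h ip0l addr0. Qed.

Lemma ipC x y : ip y x = cj (ip x y).
Proof. case: hip => _ h _ _; by rewrite h cconjE. Qed.

Lemma ipNl x z : ip (- x) z = - ip x z.
Proof. by rewrite -scaleN1r ipZl mulN1r. Qed.

Lemma ipBl x y z : ip (x - y) z = ip x z - ip y z.
Proof. by rewrite ipDl ipNl. Qed.

Lemma ipDr x y z : ip z (x + y) = ip z x + ip z y.
Proof. by rewrite ipC ipDl cjD -!ipC. Qed.

Lemma ipZr a x z : ip z (a *: x) = cj a * ip z x.
Proof. by rewrite ipC ipZl cjM -ipC. Qed.

Lemma ip0r z : ip z 0 = 0.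
Proof. by rewrite ipC ip0l cj0. Qed.

Lemma ipNr x z : ip z (- x) = - ip z x.
Proof. by rewrite ipC ipNl cjN -ipC. Qed.

Lemma ipBr x y z : ip z (x - y) = ip z x - ip z y.
Proof. by rewrite ipDr ipNr. Qed.

Lemma ip_suml (I : Type) (r : seq I) (P : pred I) (F : I -> H) z :
  ip (\sum_(i <- r | P i) F i) z = \sum_(i <- r | P i) ip (F i) z.
Proof. elim/big_rec2: _ => [|i x y _ <-]; by rewrite ?ip0l ?ipDl. Qed.

Lemma ip_sumr (I : Type) (r : seq I) (P : pred I) (F : I -> H) z :
  ip z (\sum_(i <- r | P i) F i) = \sum_(i <- r | P i) ip z (F i).
Proof. elim/big_rec2: _ => [|i x y _ <-]; by rewrite ?ip0r ?ipDr. Qed.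

Definition n2 x := complex.Re (ip x x).

Lemma ip_self x : ip x x = rC (n2 x).
Proof.
have := ipC x x; rewrite /n2; case: (ip x x) => a b /= [] /eqP.
by rewrite -subr_eq0 opprK -mulr2n mulrn_eq0 /= => /eqP ->.
Qed.

Lemma n2_ge0 x : 0 <= n2 x.
Proof. by case: hip => _ _ h _; exact: h. Qed.

Lemma n2_eq0 x : n2 x = 0 -> x = 0.
Proof. case: hip => _ _ _ h; by move=> e; apply: h; rewrite ip_self e. Qed.

Lemma hnorm_sqr x : hnorm ip x ^+ 2 = n2 x.
Proof. by rewrite /hnorm sqr_sqrtr // n2_ge0. Qed.


Definition onz (n : nat) (e : nat -> H) :=
  (forall i j, (i < n)%N -> (j < n)%N -> i != j -> ip (e i) (e j) = 0) /\ (forall i, (i < n)%N -> e i = 0 \/ ip (e i) (e i) = 1).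

Definition proj n (e : nat -> H) f := \sum_(i < n) ip f (e i) *: e i.

Section Proj.
Variables (n : nat) (e : nat -> H).
Hypothesis he : onz n e.

Lemma proj_ip f j : (j < n)%N -> ip (proj n e f) (e j) = ip f (e j).
Proof.
move=> hj; case: he => O U.
rewrite /proj ip_suml (bigD1 (Ordinal hj)) //= big1 => [|i hi]; last first.
  by rewrite ipZl O ?mulr0 //.
rewrite ipZl addr0; case: (U j hj) => [->|->]; by rewrite ?ip0r ?mulr0 ?mulr1.
Qed.

Lemma proj_orth f j : (j < n)%N -> ip (f - proj n e f) (e j) = 0.
Proof. by move=> hj; rewrite ipBl proj_ip // subrr. Qed.

Lemma ip_proj_proj f :
  ip (proj n e f) (proj n e f) = rC (\sum_(i < n) csqabs (ip f (e i))).
Proof.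
rewrite {2}/proj ip_sumr rC_sum; apply: eq_bigr => i _.
by rewrite ipZr proj_ip // mulrC mul_conj.
Qed.

Lemma ip_f_proj f :
  ip f (proj n e f) = rC (\sum_(i < n) csqabs (ip f (e i))).
Proof.
rewrite /proj ip_sumr rC_sum; apply: eq_bigr => i _.
by rewrite ipZr mulrC mul_conj.
Qed.

Lemma ip_proj_f f :
  ip (proj n e f) f = rC (\sum_(i < n) csqabs (ip f (e i))).
Proof. by rewrite ipC ip_f_proj cj_rC. Qed.

Lemma n2_proj f : n2 (proj n e f) = \sum_(i < n) csqabs (ip f (e i)).
Proof. by rewrite /n2 ip_proj_proj. Qed.

Lemma n2_sub_proj f :
  n2 (f - proj n e f) = n2 f - \sum_(i < n) csqabs (ip f (e i)).
Proof.
rewrite {1}/n2 ipBl !ipBr ip_proj_proj ip_f_proj ip_proj_f ip_self /=.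
ring.
Qed.

Lemma bessel f : \sum_(i < n) csqabs (ip f (e i)) <= n2 f.
Proof. by rewrite -subr_ge0 -n2_sub_proj n2_ge0. Qed.

End Proj.
Arguments proj_ip {n e} he f j.
Arguments proj_orth {n e} he f j.
Arguments ip_proj_proj {n e} he f.
Arguments ip_f_proj {n e} f.
Arguments ip_proj_f {n e} f.
Arguments n2_proj {n e} he f.
Arguments n2_sub_proj {n e} he f.
Arguments bessel {n e} he f.


Lemma rC_mul (x y : R) : rC (x * y) = rC x * rC y.
Proof. by rewrite /= [RHS]/*%R /= !mulr0 mul0r subr0 addr0. Qed.

Lemma ip_proj_l n g x y : (forall i, (i < n)%N -> ip (g i) y = 0) ->
  ip (proj n g x) y = 0.
Proof.
move=> h; rewrite /proj ip_suml big1 // => i _; by rewrite ipZl h ?mulr0.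
Qed.

Lemma ip_proj_r n g x y : (forall i, (i < n)%N -> ip y (g i) = 0) ->
  ip y (proj n g x) = 0.
Proof.
move=> h; rewrite /proj ip_sumr big1 // => i _; by rewrite ipZr h ?mulr0.
Qed.

Lemma ltnS_case (i n : nat) : (i < n.+1)%N -> i = n \/ (i < n)%N.
Proof. by rewrite ltnS leq_eqVlt => /orP[/eqP|]; [left|right]. Qed.

Section GS.
Variable u : nat -> H.

Definition gs_res (g : nat -> H) (n : nat) : H := u n - proj n g (u n).

Definition gs_new (g : nat -> H) (n : nat) : H :=
  if gs_res g n == 0 then 0
  else rC ((Num.sqrt (n2 (gs_res g n)))^-1) *: gs_res g n.

Fixpoint G (n : nat) : nat -> H :=
  match n with
  | 0 => fun _ => 0
  | m.+1 => fun k => if k == m then gs_new (G m) m else G m k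
  end.

Lemma G_ge n k : (n <= k)%N -> G n k = 0.
Proof.
elim: n k => [//|n IH] k hk /=.
by rewrite (gtn_eqF hk) IH // ltnW.
Qed.

Lemma G_lt n k : (k < n)%N -> G n.+1 k = G n k.
Proof. by move=> hk /=; rewrite (ltn_eqF hk). Qed.

Lemma G_n n : G n.+1 n = gs_new (G n) n.
Proof. by rewrite /= eqxx. Qed.

Lemma proj_G_S n f :
  proj n.+1 (G n.+1) f = proj n (G n) f + ip f (gs_new (G n) n) *: gs_new (G n) n.
Proof.
rewrite /proj big_ord_recr /= eqxx; congr (_ + _).
by apply: eq_bigr => i _; rewrite (ltn_eqF (ltn_ord i)).
Qed.

Lemma new_orth n i : onz n (G n) -> (i < n)%N ->
  ip (G n i) (gs_new (G n) n) = 0 /\ ip (gs_new (G n) n) (G n i) = 0.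
Proof.
move=> hon hi; have h0 : ip (gs_res (G n) n) (G n i) = 0 by exact: proj_orth.
rewrite /gs_new; case: ifP => _.
  by rewrite ip0r ip0l.
by rewrite ipZr ipZl ipC h0 cj0 !mulr0.
Qed.

Lemma G_onz n : onz n (G n).
Proof.
elim: n => [|n IH]; first by split.
have [hO hU] := IH.
split.
- move=> i j /ltnS_case [->|hi] /ltnS_case [->|hj].
  + by rewrite eqxx.
  + by move=> _; rewrite (G_lt _ _ hj) G_n; case: (new_orth _ _ IH hj) => _ ->.
  + by move=> _; rewrite (G_lt _ _ hi) G_n; case: (new_orth _ _ IH hi) => ->.
  + by move=> hij; rewrite !G_lt //; apply: hO.
- move=> i /ltnS_case [->|hi]; last first.
    by rewrite G_lt //; apply: hU.
  rewrite G_n /gs_new; case: ifP => [_|/negbT hr]; first by left.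
  right; rewrite ipZl ipZr ip_self cj_rC -!rC_mul.
  have hpos : 0 < n2 (gs_res (G n) n).
    rewrite lt_def n2_ge0 andbT; apply/eqP => /n2_eq0 h; by rewrite h eqxx in hr.
  congr complex.Complex.
  set x := n2 _ in hpos *.
  have hs : 0 < Num.sqrt x by rewrite sqrtr_gt0.
  move: (sqr_sqrtr (ltW hpos)) hs; set s := Num.sqrt x => hx hs; rewrite -hx.
  field; exact: lt0r_neq0.
Qed.

Lemma G_span n k : (k < n)%N -> u k = proj n (G n) (u k).
Proof.
elim: n k => [//|n IH] k.
rewrite proj_G_S => /ltnS_case [->|hk].
  have hsplit : u n = proj n (G n) (u n) + gs_res (G n) n.
    by rewrite /gs_res addrC subrK.
  rewrite [LHS]hsplit; congr (_ + _).
  have hun : ip (u n) (gs_res (G n) n) = rC (n2 (gs_res (G n) n)).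
    rewrite [in LHS]hsplit ipDl ip_proj_l ?add0r ?ip_self //.
    move=> i hi; rewrite ipC (proj_orth (G_onz n)) // cj0 //.
  rewrite /gs_new; case: ifP => [/eqP ->|/negbT hr]; first by rewrite scaler0.
  have hpos : 0 < n2 (gs_res (G n) n).
    rewrite lt_def n2_ge0 andbT; apply/eqP => /n2_eq0 h; by rewrite h eqxx in hr.
  rewrite ipZr hun cj_rC scalerA -rC_mul -rC_mul.
  set x := n2 _ in hpos *.
  have -> : (Num.sqrt x)^-1 * x / Num.sqrt x = 1.
    have hs : 0 < Num.sqrt x by rewrite sqrtr_gt0.
    move: (sqr_sqrtr (ltW hpos)) hs; set s := Num.sqrt x => hx hs; rewrite -hx.
    field; exact: lt0r_neq0.
  by rewrite scale1r.
have h0 : ip (u k) (gs_new (G n) n) = 0.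
  rewrite (IH k hk) ip_proj_l // => i hi; by case: (new_orth _ _ (G_onz n) hi).
by rewrite h0 scale0r addr0 -IH.
Qed.

Variable S : H -> Prop.
Hypothesis S0 : S 0.
Hypothesis SD : forall x y, S x -> S y -> S (x + y).
Hypothesis SZ : forall a x, S x -> S (a *: x).

Lemma S_sum (I : Type) (r : seq I) (P : pred I) (F : I -> H) :
  (forall i, P i -> S (F i)) -> S (\sum_(i <- r | P i) F i).
Proof. move=> h; elim/big_ind: _ => //; exact: SD. Qed.

Lemma SN x : S x -> S (- x).
Proof. by move=> h; rewrite -scaleN1r; apply: SZ. Qed.

Lemma G_in n : (forall k, (k < n)%N -> S (u k)) -> forall i, (i < n)%N -> S (G n i).
Proof.
elim: n => [//|n IH] hu i.
move=> /ltnS_case [->|hi]; last first.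
  rewrite G_lt //; apply: IH => // k hk; apply: hu; exact: ltnW.
have hGj : forall j, (j < n)%N -> S (G n j) by apply: IH => k hk; apply: hu; exact: ltnW.
have hres : S (gs_res (G n) n).
  apply: SD; first exact: hu.
  apply: SN; apply: S_sum => j _; apply: SZ; exact: hGj.
rewrite G_n /gs_new; case: ifP => _ //; exact: SZ.
Qed.

End GS.

Lemma n2N x : n2 (- x) = n2 x.
Proof. by rewrite /n2 ipNl ipNr opprK. Qed.

Lemma csqabs_eq0 (z : CC R) : csqabs z = 0 -> z = 0.
Proof.
case: z => a b; rewrite /csqabs /= => /eqP.
rewrite paddr_eq0 ?sqr_ge0 // !sqrf_eq0 => /andP[/eqP -> /eqP ->] //.
Qed.

Lemma hnorm_lt x e : 0 < e -> n2 x < e ^+ 2 -> hnorm ip x < e.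
Proof.
move=> he h; rewrite /hnorm -(ger0_norm (ltW he)) -sqrtr_sqr.
by rewrite ltr_sqrt // exprn_gt0.
Qed.

Lemma hnorm_lt_inv x e : 0 <= e -> hnorm ip x < e -> n2 x < e ^+ 2.
Proof.
move=> he h; rewrite -hnorm_sqr; rewrite ltr_pXn2r // ?nnegrE //.
by rewrite /hnorm sqrtr_ge0.
Qed.

Section Parseval.
Hypothesis hcomp : is_complete ip.
Variable v : nat -> H.
Hypothesis hv : is_ONB ip v.

Lemma onz_v n : onz n v.
Proof.
case: hv => h _; split.
  by move=> i j _ _ /negbTE hij; rewrite h hij.
by move=> i _; right; rewrite h eqxx.
Qed.

Lemma onz_single k : onz 1 (fun _ => v k).
Proof.
case: hv => h _; split; first by move=> [|i] [|j].
by move=> i _; right; rewrite h eqxx.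
Qed.

Lemma csqabs_le x k : csqabs (ip x (v k)) <= n2 x.
Proof.
have := bessel (onz_single k) x; by rewrite big_ord1.
Qed.

Definition Sv f n := \sum_(i < n) csqabs (ip f (v i)).

Lemma ip_proj_mn f m n : (n <= m)%N ->
  ip (proj m v f) (proj n v f) = rC (Sv f n).
Proof.
move=> hnm; rewrite {2}/proj ip_sumr /Sv rC_sum; apply: eq_bigr => i _.
rewrite ipZr (proj_ip (onz_v m)); last exact: leq_trans (ltn_ord i) hnm.
by rewrite mulrC mul_conj.
Qed.

Lemma n2_proj_diff f m n : (n <= m)%N ->
  n2 (proj m v f - proj n v f) = Sv f m - Sv f n.
Proof.
move=> hnm; rewrite /n2 ipBl !ipBr.
have h1 := ip_proj_mn f m n hnm.
have h2 : ip (proj n v f) (proj m v f) = rC (Sv f n) by rewrite ipC h1 cj_rC.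
rewrite h1 h2 (ip_proj_proj (onz_v m)) (ip_proj_proj (onz_v n)) /Sv /=; ring.
Qed.

Lemma Sv_ge0 f n : 0 <= Sv f n.
Proof. by apply: sumr_ge0 => i _; apply: csqabs_ge0. Qed.

Lemma Sv_le f n : Sv f n <= n2 f.
Proof. exact: bessel (onz_v n) f. Qed.

Lemma Sv_mono f : {homo Sv f : n m / (n <= m)%N >-> n <= m}.
Proof. by move=> n m hnm; rewrite -subr_ge0 -n2_proj_diff // n2_ge0. Qed.

Lemma Sv_cvg f : (Sv f n @[n --> \oo] --> n2 f)%classic.
Proof.
have hub : has_ubound (range (Sv f)) by exists (n2 f) => _ [n _ <-]; exact: Sv_le.
have hsup : has_sup (range (Sv f)) by split => //; exists (Sv f 0), 0%N.
have cvS := nondecreasing_cvgn (Sv_mono f) hub.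
suff <- : sup (range (Sv f)) = n2 f by [].
set s := sup _.
have hSs : forall n, Sv f n <= s by move=> n; apply: ub_le_sup => //; exists n.
have hC : forall e : R, 0 < e -> exists M : nat, forall m n : nat,
    (M <= m)%N -> (M <= n)%N -> hnorm ip (proj m v f - proj n v f) < e.
  move=> e he.
  have [_ [M _ <-] hM] := sup_adherent (exprn_gt0 2 he) hsup.
  exists M => m n hm hn; apply: hnorm_lt => //.
  wlog hnm : m n hm hn / (n <= m)%N.
    move=> W; case: (leqP n m) => h; first exact: W.
    by rewrite -n2N opprB; apply: W => //; exact: ltnW.
  rewrite n2_proj_diff //.
  have := hSs m; have := Sv_mono f _ _ hn; rewrite -/s in hM *; lra.
have [l hl] := hcomp (fun n => proj n v f) hC.
have hfl : f = l.
  apply/eqP; rewrite -subr_eq0; apply/eqP.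
  case: hv => _ hc; apply: hc => k.
  apply: csqabs_eq0; apply/eqP; rewrite eq_le csqabs_ge0 andbT.
  apply/ler_addgt0Pr => e he; rewrite add0r.
  have hse : 0 < Num.sqrt e by rewrite sqrtr_gt0.
  have [M hM] := hl _ hse.
  set n := maxn M k.+1.
  have -> : f - l = (f - proj n v f) + (proj n v f - l) by rewrite addrA subrK.
  rewrite ipDl (proj_orth (onz_v n)) ?add0r; last by rewrite leq_max ltnSn orbT.
  apply: le_trans (csqabs_le _ _) _.
  have := hnorm_lt_inv _ _ (sqrtr_ge0 e) (hM n (leq_maxl _ _)).
  rewrite sqr_sqrtr; [exact: ltW | exact: ltW he].
subst l.
apply/eqP; rewrite eq_le; apply/andP; split.
  apply: ge_sup; first by exists (Sv f 0), 0%N.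
  by move=> _ [n _ <-]; exact: Sv_le.
rewrite leNgt; apply/negP => hlt.
have he : 0 < n2 f - s by rewrite subr_gt0.
have hse : 0 < Num.sqrt (n2 f - s) by rewrite sqrtr_gt0.
have [M hM] := hl _ hse.
have := hnorm_lt_inv _ _ (sqrtr_ge0 _) (hM M (leqnn M)).
rewrite sqr_sqrtr; last exact: ltW he.
rewrite -n2N opprB (n2_sub_proj (onz_v M)) -/(Sv f M).
have := hSs M; lra.
Qed.

Lemma parseval f : frame_sum ip v f = (n2 f)%:E.
Proof.
rewrite /frame_sum.
have -> : (fun n => (\sum_(0 <= j < n) (csqabs (ip f (v j)))%:E)%E) = EFin \o Sv f.
  apply: funext => n /=; by rewrite sumEFin big_mkord.
rewrite EFin_lim; last by apply/cvg_ex; exists (n2 f); exact: Sv_cvg.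
by rewrite (cvg_lim _ (Sv_cvg f)).
Qed.

End Parseval.

Section FrameBN.
Hypothesis hcomp : is_complete ip.
Variables (v w : nat -> H) (N : nat).
Hypothesis hv : is_ONB ip v.

Definition Qf f := \sum_(j < N) (csqabs (ip f (w j)) - csqabs (ip f (v j))).

Lemma frame_BN f : frame_sum ip (BN N v w) f = (Qf f + n2 f)%:E.
Proof.
have h0 : forall (u : nat -> H) k, (0 <= (csqabs (ip f (u k)))%:E)%E.
  by move=> u k; rewrite lee_fin csqabs_ge0.
have hp := parseval hcomp v hv f.
rewrite /frame_sum (nneseries_split _ N) // in hp *.
rewrite (nneseries_split _ N) //.
have -> : (\sum_(0 + N <= k <oo) (csqabs (ip f (BN N v w k)))%:E)%E =
          (\sum_(0 + N <= k <oo) (csqabs (ip f (v k)))%:E)%E.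
  apply: congr_lim; apply: funext => n; apply: eq_big_nat => k /andP[hk _].
  by rewrite /BN ltnNge hk.
move: hp; set T := (\sum_(0 + N <= k <oo) _)%E.
rewrite !sumEFin add0n !big_mkord.
have -> : \sum_(i < N) csqabs (ip f (BN N v w i)) = \sum_(i < N) csqabs (ip f (w i)).
  by apply: eq_bigr => i _; rewrite /BN ltn_ord.
move: T => [t| |] //= [] <-.
rewrite /Qf sumrB; congr (_%:E); ring.
Qed.

End FrameBN.

Lemma projD n e x y : proj n e (x + y) = proj n e x + proj n e y.
Proof. by rewrite /proj -big_split; apply: eq_bigr => i _; rewrite ipDl scalerDl. Qed.

Lemma projZ n e a x : proj n e (a *: x) = a *: proj n e x.
Proof. by rewrite /proj scaler_sumr; apply: eq_bigr => i _; rewrite ipZl scalerA. Qed.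

Lemma proj0 n e : proj n e 0 = 0.
Proof. by rewrite /proj big1 // => i _; rewrite ip0l scale0r. Qed.

Lemma csqabs_scale (a : R) (z : CC R) : csqabs (rC a * z) = a ^+ 2 * csqabs z.
Proof. case: z => x y; rewrite /csqabs /=; ring. Qed.

Lemma csqabs0 : csqabs 0 = 0 :> R.
Proof. by rewrite /csqabs /= expr0n /= addr0. Qed.

Section Cont.
Context {K : nat}.
Local Notation V := 'rV[R]_K.
Local Notation CR := (complex.complex R).

Lemma rcont_add (f g : V -> R) : continuous f -> continuous g ->
  continuous (fun c => f c + g c).
Proof. by move=> hf hg x; exact: (continuousD (hf x) (hg x)). Qed.

Lemma rcont_mul (f g : V -> R) : continuous f -> continuous g ->
  continuous (fun c => f c * g c).
Proof. by move=> hf hg x; exact: (continuousM (hf x) (hg x)). Qed.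

Lemma rcont_opp (f : V -> R) : continuous f -> continuous (fun c => - f c).
Proof. by move=> hf x; exact: (continuousN (hf x)). Qed.

Lemma rcont_cst (a : R) : continuous (fun _ : V => a).
Proof. exact: cst_continuous. Qed.

Lemma rcont_coord k : continuous (fun c : V => c ord0 k).
Proof. exact: coord_continuous. Qed.

Definition ccont (F : V -> CR) :=
  continuous (fun c => complex.Re (F c)) /\ continuous (fun c => complex.Im (F c)).

Lemma ccont_Re (F : V -> CR) : ccont F -> continuous (fun c => complex.Re (F c)).
Proof. by case. Qed.

Lemma ccont_cst (a : CR) : ccont (fun _ => a).
Proof. by split; apply: rcont_cst. Qed.

Lemma ccont_add F G : ccont F -> ccont G -> ccont (fun c => F c + G c).
Proof.
move=> [h1 h2] [h3 h4]; split.
- have -> : (fun c => complex.Re (F c + G c)) = (fun c => complex.Re (F c) + complex.Re (G c)).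
    by apply: funext => c; case: (F c) => ? ?; case: (G c) => ? ?.
  exact: rcont_add.
- have -> : (fun c => complex.Im (F c + G c)) = (fun c => complex.Im (F c) + complex.Im (G c)).
    by apply: funext => c; case: (F c) => ? ?; case: (G c) => ? ?.
  exact: rcont_add.
Qed.

Lemma ccont_opp F : ccont F -> ccont (fun c => - F c).
Proof.
move=> [h1 h2]; split.
- have -> : (fun c => complex.Re (- F c)) = (fun c => - complex.Re (F c)).
    by apply: funext => c; case: (F c) => ? ?.
  exact: rcont_opp.
- have -> : (fun c => complex.Im (- F c)) = (fun c => - complex.Im (F c)).
    by apply: funext => c; case: (F c) => ? ?.
  exact: rcont_opp.
Qed.

Lemma ccont_mul F G : ccont F -> ccont G -> ccont (fun c => F c * G c).
Proof.
move=> [h1 h2] [h3 h4]; split.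
- have -> : (fun c => complex.Re (F c * G c)) =
     (fun c => complex.Re (F c) * complex.Re (G c) + - (complex.Im (F c) * complex.Im (G c))).
    by apply: funext => c; case: (F c) => ? ?; case: (G c) => ? ?.
  by apply: rcont_add; [apply: rcont_mul | apply: rcont_opp; apply: rcont_mul].
- have -> : (fun c => complex.Im (F c * G c)) =
     (fun c => complex.Re (F c) * complex.Im (G c) + complex.Im (F c) * complex.Re (G c)).
    by apply: funext => c; case: (F c) => ? ?; case: (G c) => ? ?.
  by apply: rcont_add; apply: rcont_mul.
Qed.

Lemma ccont_conj F : ccont F -> ccont (fun c => complex.conjc (F c)).
Proof.
move=> [h1 h2]; split.
- have -> : (fun c => complex.Re (complex.conjc (F c))) = (fun c => complex.Re (F c)).
    by apply: funext => c; case: (F c) => ? ?.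
  exact: h1.
- have -> : (fun c => complex.Im (complex.conjc (F c))) = (fun c => - complex.Im (F c)).
    by apply: funext => c; case: (F c) => ? ?.
  exact: rcont_opp.
Qed.

Lemma ccont_sum (I : Type) (r : seq I) (F : I -> V -> CR) :
  (forall i, ccont (F i)) -> ccont (fun c => \sum_(i <- r) F i c).
Proof.
move=> hF; elim: r => [|a r IH].
  have -> : (fun c => \sum_(i <- [::]) F i c) = (fun _ => 0) by apply: funext => c; rewrite big_nil.
  exact: ccont_cst.
have -> : (fun c => \sum_(i <- a :: r) F i c) = (fun c => F a c + \sum_(i <- r) F i c).
  by apply: funext => c; rewrite big_cons.
exact: ccont_add.
Qed.

Lemma ccont_coords k1 k2 : ccont (fun c => complex.Complex (c ord0 k1) (c ord0 k2)).
Proof. by split; apply: rcont_coord. Qed.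

End Cont.

Section Main.
Hypothesis hcomp : is_complete ip.
Variables (v w : nat -> H) (N : nat).
Hypothesis hv : is_ONB ip v.
Hypothesis hw : forall j, hnorm ip (w j) = 1.
Hypothesis hN : (1 <= N)%N.

Definition uu k := if (k < N)%N then v k else w (k - N).
Definition MM := (N + N)%N.
Definition ee := G uu MM.

Local Notation Sh := (@in_HN R H N v w).

Lemma Sh0 : Sh 0.
Proof.
exists (fun _ => 0), (fun _ => 0); rewrite big1 // => j _; by rewrite !scale0r addr0.
Qed.

Lemma ShD x y : Sh x -> Sh y -> Sh (x + y).
Proof.
move=> [a [b ->]] [a' [b' ->]].
exists (fun j => a j + a' j), (fun j => b j + b' j).
rewrite -big_split; apply: eq_bigr => j _; rewrite !scalerDl.
by rewrite addrACA.
Qed.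

Lemma ShZ c x : Sh x -> Sh (c *: x).
Proof.
move=> [a [b ->]]; exists (fun j => c * a j), (fun j => c * b j).
by rewrite scaler_sumr; apply: eq_bigr => j _; rewrite scalerDr !scalerA.
Qed.

Lemma Sh_v j : (j < N)%N -> Sh (v j).
Proof.
move=> hj; exists (fun i => (i == j)%:R), (fun _ => 0).
rewrite (bigD1 (Ordinal hj)) //= eqxx scale1r scale0r addr0 big1 ?addr0 // => i hi.
have -> : (i == j :> nat) = false by apply/negbTE; exact: hi.
by rewrite !scale0r addr0.
Qed.

Lemma Sh_w j : (j < N)%N -> Sh (w j).
Proof.
move=> hj; exists (fun _ => 0), (fun i => (i == j)%:R).
rewrite (bigD1 (Ordinal hj)) //= eqxx scale1r scale0r add0r big1 ?addr0 // => i hi.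
have -> : (i == j :> nat) = false by apply/negbTE; exact: hi.
by rewrite !scale0r addr0.
Qed.

Lemma Sh_u k : (k < MM)%N -> Sh (uu k).
Proof.
rewrite /uu /MM => hk; case: ifP => h; first exact: Sh_v.
by apply: Sh_w; rewrite ltn_subLR // leqNgt h.
Qed.

Lemma ee_onz : onz MM ee.
Proof. exact: G_onz. Qed.

Lemma ee_Sh i : (i < MM)%N -> Sh (ee i).
Proof. apply: G_in; [exact: Sh0 | exact: ShD | exact: ShZ | exact: Sh_u]. Qed.

Lemma Sh_proj x : Sh x -> x = proj MM ee x.
Proof.
move=> [a [b ->]].
rewrite /proj.
pose Sp y := y = proj MM ee y.
suff : Sp (\sum_(j < N) (a j *: v j + b j *: w j)) by [].
apply: (@S_sum Sp).
- by rewrite /Sp proj0.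
- by move=> y z; rewrite /Sp projD => <- <-.
move=> j _; rewrite /Sp projD !projZ.
have hj := ltn_ord j.
have hv' : v j = uu j by rewrite /uu hj.
have hw' : w j = uu (N + j) by rewrite /uu ltnNge leq_addr /= addKn.
rewrite hv' hw' -!G_span //.
  by rewrite /MM ltn_add2l.
by rewrite /MM ltn_addr.
Qed.

Lemma n2_v j : n2 (v j) = 1.
Proof. by case: hv => h _; rewrite /n2 h eqxx. Qed.

Lemma n2_w j : n2 (w j) = 1.
Proof. by rewrite -hnorm_sqr hw expr1n. Qed.

Lemma hnorm_of_n2 x : n2 x = 1 -> hnorm ip x = 1.
Proof. by move=> h; rewrite /hnorm -/(n2 x) h sqrtr1. Qed.

Lemma sum_csq_e x : Sh x -> \sum_(i < MM) csqabs (ip x (ee i)) = n2 x.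
Proof. by move=> hx; rewrite -(n2_proj ee_onz) -(Sh_proj _ hx). Qed.

Lemma trace0 : \sum_(i < MM) Qf v w N (ee i) = 0.
Proof.
rewrite /Qf exchange_big /=; apply: big1 => j _.
rewrite sumrB.
have h1 : forall x, Sh x -> \sum_(i < MM) csqabs (ip (ee i) x) = n2 x.
  move=> x hx; rewrite -(sum_csq_e _ hx); apply: eq_bigr => i _.
  by rewrite ipC csqabs_conj.
by rewrite !h1 ?n2_v ?n2_w ?subrr //; [exact: Sh_v | exact: Sh_w].
Qed.

Lemma Qf0 : Qf v w N 0 = 0.
Proof. by rewrite /Qf big1 // => j _; rewrite !ip0l csqabs0 subrr. Qed.

Lemma exists_nonzero : exists2 i, (i < MM)%N & ee i != 0.
Proof.
case: (pselect (exists2 i, (i < MM)%N & ee i != 0)) => // hn.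
have hv0 : v 0 = proj MM ee (v 0) by apply: Sh_proj; apply: Sh_v.
have : proj MM ee (v 0) = 0.
  rewrite /proj big1 // => i _; case: (eqVneq (ee i) 0) => [->|hi]; first by rewrite scaler0.
  by exfalso; apply: hn; exists i.
rewrite -hv0 => h; have := n2_v 0; rewrite h /n2 ip0l /= => /eqP; by rewrite eq_sym oner_eq0.
Qed.

Lemma ee_unit i : (i < MM)%N -> ee i != 0 -> n2 (ee i) = 1.
Proof.
move=> hi hne; case: ee_onz => _ hU; case: (hU i hi) => h; first by rewrite h eqxx in hne.
by rewrite /n2 h.
Qed.

Lemma exists_low : exists2 i, (i < MM)%N & ee i != 0 /\ Qf v w N (ee i) <= 0.
Proof.
case: (pselect (exists2 i, (i < MM)%N & ee i != 0 /\ Qf v w N (ee i) <= 0)) => // hn.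
have hpos : forall i : 'I_MM, 0 <= Qf v w N (ee i).
  move=> i; case: (eqVneq (ee i) 0) => [->|hi]; first by rewrite Qf0.
  rewrite leNgt; apply/negP => hlt; apply: hn; exists i => //; split => //; exact: ltW.
have [i0 hi0 hne] := exists_nonzero.
have hlt : 0 < Qf v w N (ee i0).
  rewrite ltNge; apply/negP => hle; apply: hn; by exists i0.
have := trace0; rewrite (bigD1 (Ordinal hi0)) //=.
have : 0 <= \sum_(i < MM | i != Ordinal hi0) Qf v w N (ee i).
  by apply: sumr_ge0 => i _; exact: hpos i.
lra.
Qed.

Lemma exists_high : exists2 i, (i < MM)%N & ee i != 0 /\ 0 <= Qf v w N (ee i).
Proof.
case: (pselect (exists2 i, (i < MM)%N & ee i != 0 /\ 0 <= Qf v w N (ee i))) => // hn.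
have hneg : forall i : 'I_MM, Qf v w N (ee i) <= 0.
  move=> i; case: (eqVneq (ee i) 0) => [->|hi]; first by rewrite Qf0.
  rewrite leNgt; apply/negP => hlt; apply: hn; exists i => //; split => //; exact: ltW.
have [i0 hi0 hne] := exists_nonzero.
have hlt : Qf v w N (ee i0) < 0.
  rewrite ltNge; apply/negP => hle; apply: hn; by exists i0.
have := trace0; rewrite (bigD1 (Ordinal hi0)) //=.
have : \sum_(i < MM | i != Ordinal hi0) Qf v w N (ee i) <= 0.
  by apply: sumr_le0 => i _; exact: hneg i.
lra.
Qed.

Lemma rC_opp (x : R) : rC (- x) = - rC x.
Proof. by apply: (addIr (rC x)); rewrite -rC_add !addNr. Qed.

Definition K2 := (MM + MM)%N.
Definition coef (c : 'rV[R]_K2) (i : 'I_MM) : CC R :=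
  complex.Complex (c ord0 (lshift MM i)) (c ord0 (rshift MM i)).
Definition gv (c : 'rV[R]_K2) := \sum_(i < MM) coef c i *: ee i.

Lemma gv_Sh c : Sh (gv c).
Proof.
apply: (@S_sum Sh Sh0 ShD) => i _; apply: ShZ; apply: ee_Sh; exact: ltn_ord.
Qed.

Lemma ccont_ip_gv x : ccont (fun c => ip (gv c) x).
Proof.
have -> : (fun c => ip (gv c) x) = (fun c => \sum_(i < MM) coef c i * ip (ee i) x).
  apply: funext => c; rewrite /gv ip_suml; apply: eq_bigr => i _; by rewrite ipZl.
apply: ccont_sum => i; apply: ccont_mul; [exact: ccont_coords | exact: ccont_cst].
Qed.

Lemma ccont_n2 : continuous (fun c => n2 (gv c)).
Proof.
have -> : (fun c => n2 (gv c)) = (fun c => complex.Re (\sum_(i < MM) \sum_(j < MM)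
     coef c i * (cj (coef c j) * ip (ee i) (ee j)))).
  apply: funext => c; rewrite /n2 {1}/gv ip_suml; congr complex.Re.
  apply: eq_bigr => i _; rewrite ipZl /gv ip_sumr mulr_sumr.
  by apply: eq_bigr => j _; rewrite ipZr.
apply: ccont_Re; apply: ccont_sum => i; apply: ccont_sum => j.
apply: ccont_mul; first exact: ccont_coords.
apply: ccont_mul; last exact: ccont_cst.
apply: ccont_conj; exact: ccont_coords.
Qed.

Lemma Phi_eq f : Phi ip N v w f = complex.Re (\sum_(j < N)
   (ip f (w j) * cj (ip f (w j)) + - (ip f (v j) * cj (ip f (v j)))) + 1).
Proof.
have -> : Phi ip N v w f = complex.Re (rC (Phi ip N v w f)) by [].
rewrite /Phi rC_add rC_sum; congr (complex.Re (_ + _)).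
by apply: eq_bigr => j _; rewrite rC_add rC_opp !mul_conj.
Qed.

Lemma ccont_Phi : continuous (fun c => Phi ip N v w (gv c)).
Proof.
have -> : (fun c => Phi ip N v w (gv c)) = (fun c => complex.Re (\sum_(j < N)
   (ip (gv c) (w j) * cj (ip (gv c) (w j)) + - (ip (gv c) (v j) * cj (ip (gv c) (v j)))) + 1)).
  by apply: funext => c; rewrite Phi_eq.
apply: ccont_Re; apply: ccont_add; last exact: ccont_cst.
apply: ccont_sum => j; apply: ccont_add; last apply: ccont_opp;
  (apply: ccont_mul; [exact: ccont_ip_gv | apply: ccont_conj; exact: ccont_ip_gv]).
Qed.

Definition Kset : set 'rV[R]_K2 :=
  [set c : 'rV[R]_K2 | forall k, (fun _ => `[-1, 1]%classic) k (c ord0 k)] `&` [set c : 'rV[R]_K2 | n2 (gv c) = 1].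

Lemma Kcompact : compact Kset.
Proof.
have h1 := @rV_compact R K2 (fun _ => `[-1 : R, 1]%classic) (fun _ => @segment_compact R (-1) 1).
have h2 := (continuous_closedP _).1 ccont_n2 _ (@closed_eq R 1).
exact: (compact_closedI h1 h2).
Qed.

Definition cf f : 'rV[R]_K2 :=
  \row_k match fintype.split k with
         | inl i => complex.Re (ip f (ee i))
         | inr i => complex.Im (ip f (ee i)) end.

Lemma coef_cf f i : coef (cf f) i = ip f (ee i).
Proof.
rewrite /coef !mxE.
have -> : fintype.split (lshift MM i) = inl i by exact: (unsplitK (inl i)).
have -> : fintype.split (rshift MM i) = inr i by exact: (unsplitK (inr i)).
by case: (ip f (ee i)).
Qed.

Lemma gv_cf f : Sh f -> gv (cf f) = f.
Proof.
move=> hf; rewrite {2}(Sh_proj _ hf) /gv /proj.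
apply: eq_bigr => i _; by rewrite coef_cf.
Qed.

Lemma cf_K f : Sh f -> n2 f = 1 -> Kset (cf f).
Proof.
move=> hf hn; split; last by rewrite /= gv_cf.
move=> k /=; rewrite mxE.
have hb : forall i : 'I_MM, csqabs (ip f (ee i)) <= 1.
  move=> i; rewrite -hn -(sum_csq_e _ hf) (bigD1 i) //= lerDl.
  by apply: sumr_ge0 => j _; exact: csqabs_ge0.
case: (fintype.split k) => i; have := hb i; case: (ip f (ee i)) => a b;
  rewrite /csqabs /= in_itv /= => h; apply/andP; split; nra.
Qed.

Lemma extremes : exists fmin fmax,
  [/\ in_SH_HN ip N v w fmin, in_SH_HN ip N v w fmax &
      forall f, in_SH_HN ip N v w f ->
        Phi ip N v w fmin <= Phi ip N v w f <= Phi ip N v w fmax].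
Proof.
have [i0 hi0 hne] := exists_nonzero.
have hK0 : (Kset !=set0)%classic.
  exists (cf (ee i0)); apply: cf_K; [exact: ee_Sh | exact: ee_unit].
have hc := @continuous_subspaceT _ _ Kset _ ccont_Phi.
have [cmin hcmin hmin] := EVT_min_rV hK0 Kcompact hc.
have [cmax hcmax hmax] := EVT_max_rV hK0 Kcompact hc.
rewrite inE in hcmin; rewrite inE in hcmax.
have hSH : forall c, Kset c -> in_SH_HN ip N v w (gv c).
  move=> c [_ hc1]; split; [exact: hnorm_of_n2 | exact: gv_Sh].
exists (gv cmin), (gv cmax); split; [exact: hSH | exact: hSH |].
move=> f [hf1 hf2].
have hn : n2 f = 1 by rewrite -hnorm_sqr hf1 expr1n.
have hKf := cf_K _ hf2 hn.
rewrite -(gv_cf _ hf2); apply/andP; split; [apply: hmin | apply: hmax]; by rewrite inE.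
Qed.

Lemma PhiQ f : Phi ip N v w f = Qf v w N f + 1.
Proof. by []. Qed.

Lemma Qf_scale (a : R) g : Qf v w N (rC a *: g) = a ^+ 2 * Qf v w N g.
Proof.
rewrite /Qf mulr_sumr; apply: eq_bigr => j _.
by rewrite !ipZl !csqabs_scale mulrBr.
Qed.

Lemma n2_scale (a : R) g : n2 (rC a *: g) = a ^+ 2 * n2 g.
Proof.
rewrite /n2 ipZl ipZr ip_self cj_rC -!rC_mul /=; by rewrite mulrA expr2.
Qed.

Lemma ip_proj_Sh f x : Sh x -> ip f x = ip (proj MM ee f) x.
Proof.
move=> hx.
have h0 : ip (f - proj MM ee f) x = 0.
  rewrite (Sh_proj _ hx) ip_proj_r // => i hi; exact: (proj_orth ee_onz).
by rewrite -{1}(subrK (proj MM ee f) f) ipDl h0 add0r.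
Qed.

Lemma Qf_proj f : Qf v w N f = Qf v w N (proj MM ee f).
Proof.
rewrite /Qf; apply: eq_bigr => j _.
by rewrite (ip_proj_Sh f _ (Sh_w _ (ltn_ord j))) (ip_proj_Sh f _ (Sh_v _ (ltn_ord j))).
Qed.

Lemma proj_Sh f : Sh (proj MM ee f).
Proof.
apply: (@S_sum Sh Sh0 ShD) => i _; apply: ShZ; apply: ee_Sh; exact: ltn_ord.
Qed.

Lemma Qf_lower (m : R) : (forall g, in_SH_HN ip N v w g -> m <= Phi ip N v w g) ->
  forall g, Sh g -> (m - 1) * n2 g <= Qf v w N g.
Proof.
move=> hm g hg.
have [h0|hpos] := eqVneq (n2 g) 0.
  by rewrite h0 (n2_eq0 _ h0) Qf0 mulr0.
have hpos' : 0 < n2 g by rewrite lt_def hpos n2_ge0.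
set t := (Num.sqrt (n2 g))^-1.
have ht : t ^+ 2 * n2 g = 1.
  have hs : 0 < Num.sqrt (n2 g) by rewrite sqrtr_gt0.
  rewrite /t; move: (sqr_sqrtr (ltW hpos')) hs.
  set s := Num.sqrt _ => hx hs; rewrite -hx; field; exact: lt0r_neq0.
have := hm (rC t *: g); rewrite PhiQ Qf_scale => h1.
have {}h1 : m - 1 <= t ^+ 2 * Qf v w N g.
  suff : m <= t ^+ 2 * Qf v w N g + 1 by lra.
  apply: h1; split; last exact: ShZ.
  by apply: hnorm_of_n2; rewrite n2_scale.
have h2 := ler_wpM2r (ltW hpos') h1.
rewrite mulrAC ht mul1r in h2; exact: h2.
Qed.

Lemma Qf_upper (m : R) : (forall g, in_SH_HN ip N v w g -> Phi ip N v w g <= m) ->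
  forall g, Sh g -> Qf v w N g <= (m - 1) * n2 g.
Proof.
move=> hm g hg.
have [h0|hpos] := eqVneq (n2 g) 0.
  by rewrite h0 (n2_eq0 _ h0) Qf0 mulr0.
have hpos' : 0 < n2 g by rewrite lt_def hpos n2_ge0.
set t := (Num.sqrt (n2 g))^-1.
have ht : t ^+ 2 * n2 g = 1.
  have hs : 0 < Num.sqrt (n2 g) by rewrite sqrtr_gt0.
  rewrite /t; move: (sqr_sqrtr (ltW hpos')) hs.
  set s := Num.sqrt _ => hx hs; rewrite -hx; field; exact: lt0r_neq0.
have := hm (rC t *: g); rewrite PhiQ Qf_scale => h1.
have {}h1 : t ^+ 2 * Qf v w N g <= m - 1.
  suff : t ^+ 2 * Qf v w N g + 1 <= m by lra.
  apply: h1; split; last exact: ShZ.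
  by apply: hnorm_of_n2; rewrite n2_scale.
have h2 := ler_wpM2r (ltW hpos') h1.
rewrite mulrAC ht mul1r in h2; exact: h2.
Qed.

Lemma n2_split f : n2 f = n2 (proj MM ee f) + n2 (f - proj MM ee f).
Proof. rewrite (n2_proj ee_onz) (n2_sub_proj ee_onz); ring. Qed.

Lemma main_inner :
  (is_frame ip (BN N v w) <->
     (forall f, in_SH_HN ip N v w f -> 0 < Phi ip N v w f)) /\
  (is_frame ip (BN N v w) ->
     exists fmin fmax : H,
       [/\ in_SH_HN ip N v w fmin, in_SH_HN ip N v w fmax,
           (forall f, in_SH_HN ip N v w f ->
              Phi ip N v w fmin <= Phi ip N v w f <= Phi ip N v w fmax),
           optimal_lower_bound ip (BN N v w) (Phi ip N v w fmin) &
           optimal_upper_bound ip (BN N v w) (Phi ip N v w fmax)]).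
Proof.
have [fmin [fmax [hmin hmax hall]]] := extremes.
have hSHe : forall i, (i < MM)%N -> ee i != 0 -> in_SH_HN ip N v w (ee i).
  move=> i hi hne; split; [apply: hnorm_of_n2; exact: ee_unit | exact: ee_Sh].
have hm1 : Phi ip N v w fmin <= 1.
  have [i hi [hne hq]] := exists_low.
  have /andP[h _] := hall _ (hSHe i hi hne); rewrite (PhiQ (ee i)) in h; lra.
have hM1 : 1 <= Phi ip N v w fmax.
  have [i hi [hne hq]] := exists_high.
  have /andP[_ h] := hall _ (hSHe i hi hne); rewrite (PhiQ (ee i)) in h; lra.
set m := Phi ip N v w fmin in hm1 hall *.
set Mx := Phi ip N v w fmax in hM1 hall *.
have hlow : forall f, m * n2 f <= Qf v w N f + n2 f.
  move=> f; rewrite (Qf_proj f) (n2_split f).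
  have := Qf_lower m (fun g hg => proj1 (andP (hall g hg))) _ (proj_Sh f).
  have := n2_ge0 (f - proj MM ee f); have := n2_ge0 (proj MM ee f).
  nra.
have hup : forall f, Qf v w N f + n2 f <= Mx * n2 f.
  move=> f; rewrite (Qf_proj f) (n2_split f).
  have := Qf_upper Mx (fun g hg => proj2 (andP (hall g hg))) _ (proj_Sh f).
  have := n2_ge0 (f - proj MM ee f); have := n2_ge0 (proj MM ee f).
  nra.
have hfs : forall f, frame_sum ip (BN N v w) f = (Qf v w N f + n2 f)%:E.
  by move=> f; apply: frame_BN.
have hlb : lower_frame_bound ip (BN N v w) m.
  by move=> f; rewrite hfs hnorm_sqr lee_fin.
have hub : upper_frame_bound ip (BN N v w) Mx.
  by move=> f; rewrite hfs hnorm_sqr lee_fin.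
have hn1 : forall f, in_SH_HN ip N v w f -> n2 f = 1.
  by move=> f [h _]; rewrite -hnorm_sqr h expr1n.
split.
- split.
  + move=> [A [B [hA hAB hl hu]]] f hf.
    have := hl f; rewrite hfs hnorm_sqr lee_fin (hn1 f hf) PhiQ; lra.
  + move=> hpos; exists m, Mx; split => //.
    * exact: hpos.
    * lra.
- move=> _; exists fmin, fmax; split => //.
  + split => // A' hA'.
    have := hA' fmin; rewrite hfs hnorm_sqr lee_fin (hn1 _ hmin) /m PhiQ; lra.
  + split => // B' hB'.
    have := hB' fmax; rewrite hfs hnorm_sqr lee_fin (hn1 _ hmax) /Mx PhiQ; lra.
Qed.

End Main.


End IP.

Theorem mainTheorem3 (R : realType) (H : lmodType (CC R)) (ip : H -> H -> CC R)
  (v w : nat -> H) (N : nat) :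
  is_hilbert ip ->
  is_ONB ip v ->
  (forall j, hnorm ip (w j) = 1) ->
  (1 <= N)%N ->
  (is_frame ip (BN N v w) <->
     (forall f, in_SH_HN ip N v w f -> 0 < Phi ip N v w f)) /\
  (is_frame ip (BN N v w) ->
     exists fmin fmax : H,
       [/\ in_SH_HN ip N v w fmin, in_SH_HN ip N v w fmax,
           (forall f, in_SH_HN ip N v w f ->
              Phi ip N v w fmin <= Phi ip N v w f <= Phi ip N v w fmax),
           optimal_lower_bound ip (BN N v w) (Phi ip N v w fmin) &
           optimal_upper_bound ip (BN N v w) (Phi ip N v w fmax)]).
Proof.
move=> [hip hcomp] hv hw hN.
exact: (@main_inner R H ip hip hcomp v w N hv hw hN).
Qed.
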